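(* There exists a finite simple graph $G$ on at most $2\times 10^6$ vertices with girth at least $6$ and fractional chromatic number $\chi_f(G)\geq 3.1$.
   Context: The girth is the length of a shortest cycle; $\chi_f$ denotes the fractional chromatic number. *)

(* Defs.v *)
From HB Require Import structures.
From mathcomp Require Import all_boot all_order all_algebra.
From mathcomp Require Import reals.
Set Implicit Arguments. Unset Strict Implicit. Unset Printing Implicit Defensive.
Import Order.TTheory GRing.Theory Num.Theory.

Definition simple_graph (T : finType) (e : rel T) : Prop :=
  symmetric e /\ irreflexive e.

Definition has_cycle_of_length (T : finType) (e : rel T) (k : nat) : Prop :=
  exists f : 'I_k -> T, injective f /\ forall i : 'I_k, e (f i) (f (ordS i)).

(* girth(G) >= g : G has no cycle of length < g (girth = +oo if acyclic). *)
Definition girth_ge (T : finType) (e : rel T) (g : nat) : Prop :=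
  forall k, 3 <= k < g -> ~ has_cycle_of_length e k.

Definition independent (T : finType) (e : rel T) (S : {set T}) : bool :=
  [forall x in S, forall y in S, ~~ e x y].

Local Open Scope ring_scope.

Definition fractional_colouring (R : realType) (T : finType) (e : rel T)
    (w : {set T} -> R) : Prop :=
  (forall S, 0 <= w S) /\
  (forall v : T, 1 <= \sum_(S : {set T} | independent e S && (v \in S)) w S).

Definition fc_weight (R : realType) (T : finType) (e : rel T)
    (w : {set T} -> R) : R :=
  \sum_(S : {set T} | independent e S) w S.

(* chi_f(G) >= c : c is a lower bound of the weights of all fractional
   colourings, i.e. the infimum defining chi_f(G) is >= c. *)
Definition frac_chrom_ge (R : realType) (T : finType) (e : rel T) (c : R) : Prop :=
  forall w : {set T} -> R, fractional_colouring e w -> c <= fc_weight e w.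

(* Main.v *)
Require Import Defs.
From HB Require Import structures.
From mathcomp Require Import all_boot all_order all_algebra.
From mathcomp Require Import reals.
From mathcomp Require Import sequences exp.
From mathcomp Require Import ring lra zify.
Set Implicit Arguments. Unset Strict Implicit. Unset Printing Implicit Defensive.
Import Order.TTheory GRing.Theory Num.Theory.

Section Rot.
Variable l : nat.
Definition rot (r i : 'I_l.+1) : 'I_l.+1 := Ordinal (ltn_pmod (i + r) (ltn0Sn l)).

Lemma rot0 r : rot r ord0 = r.
Proof. by apply: ord_inj; rewrite /= add0n modn_small. Qed.

Lemma rot_inj r : injective (rot r).
Proof.
move=> i j /(congr1 val) /= /eqP; rewrite eqn_modDr => /eqP.
by rewrite !modn_small // => /ord_inj.
Qed.

Lemma rot_surj r j : exists i, rot r i = j.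
Proof.
exists (Ordinal (ltn_pmod (j + (l.+1 - r)) (ltn0Sn l))); apply: ord_inj => /=.
rewrite modnDml -addnA subnK; last exact: ltnW (ltn_ord r).
by rewrite modnDr modn_small.
Qed.

Lemma rot_ordS r i : rot r (ordS i) = ordS (rot r i).
Proof.
apply: ord_inj => /=.
by rewrite (modnDml i.+1 r) -(addn1 (_ %% _)) modnDml addn1 addSn.
Qed.

Lemma ordSS_neq (i : 'I_l.+1) : (1 < l)%N -> ordS (ordS i) != i.
Proof.
move=> l1; apply/eqP => /(congr1 val) /=.
have il := ltn_ord i.
case: (ltngtP i.+1 l.+1) => [h|h|h].
- rewrite (modn_small h).
  case: (ltngtP i.+2 l.+1) => [h2|h2|h2].
  + by rewrite (modn_small h2) => /eqP; rewrite -addn2 -{2}[nat_of_ord i]addn0 eqn_add2l.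
  + by exfalso; lia.
  + by rewrite h2 modnn => i0; move: h2 l1; rewrite -i0; lia.
- by exfalso; lia.
- by rewrite h modnn modn_small //; lia.
Qed.
Lemma rot_injl i : injective (fun r => rot r i).
Proof.
move=> r r' /(congr1 val) /= /eqP; rewrite eqn_modDl => /eqP.
by rewrite !modn_small // => /ord_inj.
Qed.
End Rot.

Section Count.
Variables N l : nat.
Definition Can := [pred f : {ffun 'I_l.+1 -> 'I_N} |
  injectiveb f && [forall i, (f ord0 <= f i)%N]].

Lemma card_Can : (#|Can| * l.+1 <= N ^ l.+1)%N.
Proof.
set Sx := setX [set f in Can] [set: 'I_l.+1].
have H : #|[set [ffun i => x.1 (rot x.2 i)] | x : {ffun 'I_l.+1 -> 'I_N} * 'I_l.+1 in Sx]| = #|Sx|.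
  apply: card_in_imset => [[f r] [f' r']]; rewrite !inE /= !andbT.
  case/andP => /injectiveP fi /forallP fm; case/andP => /injectiveP fi' /forallP fm'.
  move=> /ffunP E.
  have {}E i : f (rot r i) = f' (rot r' i) by move: (E i); rewrite !ffunE.
  have [i0 hi0] := rot_surj r ord0.
  have [j0 hj0] := rot_surj r' ord0.
  have e1 : f ord0 = f' ord0.
    apply/ord_inj/eqP; rewrite eqn_leq; apply/andP; split.
      by rewrite -{2}hj0 -E.
    by rewrite -{2}hi0 E.
  have e2 : rot r' i0 = ord0 by apply: fi'; rewrite -E hi0 e1.
  have rr : r = r' by apply: (@rot_injl l i0); rewrite /= hi0 e2.
  subst r'; congr pair; apply/ffunP => j.
  by have [i hi] := rot_surj r j; rewrite -hi; exact: E.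
rewrite cardsX cardsT card_ord cardsE in H.
rewrite -H; apply: leq_trans (max_card _) _.
by rewrite card_ffun !card_ord.
Qed.
End Count.

Local Open Scope ring_scope.

Section Coins.
Variable R : realType.
Variable N : nat.
Variable p : R.
Hypothesis p0 : 0 <= p.
Hypothesis p1 : p <= 1.

Ltac lrap := have ? := p0; have ? := p1; lra.

Definition coin := ('I_N * 'I_N)%type.
Definition wgt (g : {ffun coin -> bool}) : R :=
  \prod_(x : coin) (if g x then p else 1 - p).

Lemma wgt_ge0 g : 0 <= wgt g.
Proof. apply: prodr_ge0 => x _; case: (g x) => /=; lrap. Qed.

Lemma sum_prod_coins (F : coin -> bool -> R) :
  \sum_(g : {ffun coin -> bool}) \prod_(x : coin) F x (g x) =
  \prod_(x : coin) (F x true + F x false).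
Proof.
rewrite -bigA_distr_bigA /=; apply: eq_bigr => x _.
by rewrite big_bool /= addrC.
Qed.

Lemma ind_forall (A : {set coin}) (P : coin -> bool) :
  ([forall x in A, P x])%:R = \prod_(x in A) ((P x)%:R : R).
Proof.
case: (boolP [forall x in A, P x]) => H.
  by move/forall_inP: H => H; rewrite big1 // => x /H ->.
rewrite negb_forall_in in H; case/exists_inP: H => x xA nPx.
by rewrite (bigD1 x) //= (negbTE nPx) mul0r.
Qed.

Lemma event_prob (A : {set coin}) (b : bool) :
  \sum_(g : {ffun coin -> bool}) wgt g * ([forall x in A, g x == b])%:R =
  (if b then p else 1 - p) ^+ #|A|.
Proof.
transitivity (\sum_(g : {ffun coin -> bool}) \prod_(x : coin)
   ((if g x then p else 1 - p) * (if x \in A then ((g x == b)%:R) else 1))).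
  apply: eq_bigr => g _; rewrite ind_forall /wgt big_split /=.
  by rewrite [X in _ * X = _]big_mkcond.
rewrite (sum_prod_coins (fun x c =>
  (if c then p else 1 - p) * (if x \in A then (c == b)%:R else 1))).
transitivity (\prod_(x : coin) (if x \in A then (if b then p else 1 - p) else 1)).
  by apply: eq_bigr => x _; case: (x \in A); case: b => /=; ring.
by rewrite -big_mkcond /= prodr_const.
Qed.

Lemma wgt_sum1 : \sum_(g : {ffun coin -> bool}) wgt g = 1.
Proof.
have := event_prob set0 true; rewrite cards0 expr0 => <-.
apply: eq_bigr => g _.
have -> : [forall x in set0, g x == true] = true.
  by apply/forall_inP => x; rewrite in_set0.
by rewrite mulr1.
Qed.

Definition ep (a b : 'I_N) : coin := if (a < b)%N then (a, b) else (b, a).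
Definition adj (g : {ffun coin -> bool}) : rel 'I_N :=
  fun a b => (a != b) && g (ep a b).

Lemma ep_sym a b : ep a b = ep b a.
Proof.
rewrite /ep; case: (ltngtP a b) => // eab.
by rewrite (ord_inj eab).
Qed.

Lemma adj_sym g : symmetric (adj g).
Proof. by move=> a b; rewrite /adj ep_sym eq_sym. Qed.

Lemma adj_irr g : irreflexive (adj g).
Proof. by move=> a; rewrite /adj eqxx. Qed.

Definition pairs (S : {set 'I_N}) : {set coin} :=
  [set x | (x.1 \in S) && (x.2 \in S) && (x.1 < x.2)%N].

Lemma ord_neq_lt (a b : 'I_N) : (a < b)%N -> a != b.
Proof. by move=> ab; apply/negP => /eqP eab; rewrite eab ltnn in ab. Qed.

Lemma indep_pairs g S :
  independent (adj g) S = [forall x in pairs S, g x == false].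
Proof.
apply/idP/idP.
  move=> H; apply/forall_inP => [[a b]]; rewrite inE /= => /andP[/andP[aS bS] ab].
  move/forall_inP: H => /(_ a aS)/forall_inP/(_ b bS).
  by rewrite /adj /ep ab (ord_neq_lt ab) /= => /negbTE ->.
move=> H; apply/forall_inP => a aS; apply/forall_inP => b bS; rewrite /adj.
case: (ltngtP a b) => [ab|ba|eab].
- have : (a, b) \in pairs S by rewrite inE /= aS bS ab.
  by move/(forall_inP H)/eqP; rewrite /ep ab => ->; rewrite andbF.
- have : (b, a) \in pairs S by rewrite inE /= aS bS ba.
  by move/(forall_inP H)/eqP; rewrite /ep ltnNge (ltnW ba) => ->; rewrite andbF.
- by rewrite (ord_inj eab) eqxx.
Qed.

Lemma card_pairs S : #|pairs S| = 'C(#|S|, 2).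
Proof.
rewrite -cards_draws.
have -> : [set B : {set 'I_N} | B \subset S & #|B| == 2] =
          (fun x : coin => [set x.1; x.2]) @: pairs S.
  apply/setP => B; rewrite inE; apply/idP/idP.
    case/andP => BS /cards2P [x [y [xy EB]]]; rewrite EB in BS *.
    have xS : x \in S by rewrite (subsetP BS) // !inE eqxx.
    have yS : y \in S by rewrite (subsetP BS) // !inE eqxx orbT.
    case: (ltngtP x y) => [lxy|lyx|exy].
    - by apply/imsetP; exists (x, y) => //; rewrite inE /= xS yS lxy.
    - by apply/imsetP; exists (y, x); [rewrite inE /= xS yS lyx | rewrite setUC].
    - by rewrite (ord_inj exy) eqxx in xy.
  case/imsetP => [[a b]]; rewrite inE /= => /andP[/andP[aS bS] ab] ->.
  rewrite cards2 (ord_neq_lt ab) andbT.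
  by apply/subsetP => z; rewrite !inE => /orP[] /eqP ->.
apply/esym/card_in_imset => [[a b] [c d]]; rewrite !inE /=.
move=> /andP[/andP[_ _] ab] /andP[/andP[_ _] cd] E.
have aE : a \in [set c; d] by rewrite -E !inE eqxx.
have cE : c \in [set a; b] by rewrite E !inE eqxx.
have bE : b \in [set c; d] by rewrite -E !inE eqxx orbT.
move: aE cE bE; rewrite !inE => /orP[/eqP ac|/eqP ad] /orP[/eqP ca|/eqP cb].
- subst c => /orP[/eqP ba|/eqP -> //]; by rewrite ba ltnn in ab.
- subst c => /orP[/eqP ba|/eqP -> //]; by rewrite ba ltnn in ab.
- by subst d; subst c; rewrite ltnn in cd.
- by subst d; subst c; move: (ltn_trans ab cd); rewrite ltnn.
Qed.

Definition edges l (f : {ffun 'I_l.+1 -> 'I_N}) : {set coin} :=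
  [set ep (f i) (f (ordS i)) | i : 'I_l.+1].
Definition cyc l g (f : {ffun 'I_l.+1 -> 'I_N}) : bool :=
  [forall i, g (ep (f i) (f (ordS i)))].

Lemma cyc_edges l g (f : {ffun 'I_l.+1 -> 'I_N}) :
  cyc g f = [forall x in edges f, g x == true].
Proof.
apply/forallP/forall_inP => H x.
  by case/imsetP => i _ ->; rewrite eqb_id; exact: H.
by move: (H (ep (f x) (f (ordS x)))); rewrite eqb_id; apply; apply/imsetP; exists x.
Qed.

Lemma ep_inj_cases a b c d : ep a b = ep c d -> (a = c /\ b = d) \/ (a = d /\ b = c).
Proof.
by rewrite /ep; case: (a < b)%N; case: (c < d)%N => [] [-> ->]; by [left|right].
Qed.

Lemma card_edges l (f : {ffun 'I_l.+1 -> 'I_N}) :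
  (1 < l)%N -> injective f -> #|edges f| = l.+1.
Proof.
move=> l1 fi; rewrite card_imset ?card_ord // => i j /ep_inj_cases [[/fi -> //]|[E1 E2]].
have h1 := fi _ _ E1; have h2 := fi _ _ E2.
by move: (ordSS_neq j l1); rewrite -h1 h2 eqxx.
Qed.

Lemma card_sum (T : finType) (P Q : pred T) :
  (#|[pred x | P x && Q x]|%:R : R) = \sum_(x | P x) (Q x)%:R.
Proof.
rewrite -sum1_card natr_sum big_mkcondr /=.
by apply: eq_bigr => x _; case: (Q x).
Qed.

Lemma EY l : (1 < l)%N ->
  \sum_(g : {ffun coin -> bool}) wgt g * (#|[pred f | Can N l f && cyc g f]|)%:R
  = #|Can N l|%:R * p ^+ l.+1.
Proof.
move=> l1.
under eq_bigr do rewrite card_sum mulr_sumr.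
rewrite exchange_big /=.
transitivity (\sum_(f | Can N l f) p ^+ l.+1).
  apply: eq_bigr => f /andP[/injectiveP fi _].
  under eq_bigr do rewrite cyc_edges.
  by rewrite event_prob card_edges.
by rewrite sumr_const mulr_natl.
Qed.

Definition Xr g k : R :=
  \sum_(S : {set 'I_N} | #|S| == k) ([forall x in pairs S, g x == false])%:R.

Lemma EX k : \sum_(g : {ffun coin -> bool}) wgt g * Xr g k = 'C(N, k)%:R * (1 - p) ^+ 'C(k, 2).
Proof.
under eq_bigr do rewrite /Xr mulr_sumr.
rewrite exchange_big /=.
transitivity (\sum_(S : {set 'I_N} | #|S| == k) (1 - p) ^+ 'C(k, 2)).
  by apply: eq_bigr => S /eqP HS; rewrite event_prob card_pairs HS.
rewrite sumr_const mulr_natl; congr (_ *+ _).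
rewrite -[in RHS](card_ord N) -card_draws. apply: eq_card => S. by rewrite inE.
Qed.

Definition Dl l g : {set 'I_N} :=
  [set (f : {ffun 'I_l.+1 -> 'I_N}) ord0 | f in [pred f : {ffun 'I_l.+1 -> 'I_N} | Can N l f && cyc g f]].

Lemma exists_good k m :
  'C(N, k)%:R * (1 - p) ^+ 'C(k, 2) +
  (#|Can N 2|%:R * p ^+ 3 + #|Can N 3|%:R * p ^+ 4 + #|Can N 4|%:R * p ^+ 5) / m.+1%:R < 1 ->
  exists g, (forall S : {set 'I_N}, #|S| = k -> ~~ independent (adj g) S) /\
            (#|Dl 2 g| + #|Dl 3 g| + #|Dl 4 g| <= m)%N.
Proof.
move=> H.
pose Y := fun g : {ffun coin -> bool} => (#|[pred f | Can N 2 f && cyc g f]| + #|[pred f | Can N 3 f && cyc g f]|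
   + #|[pred f | Can N 4 f && cyc g f]|)%N.
case: (boolP [exists g, [forall S : {set 'I_N}, (#|S| == k) ==> ~~ independent (adj g) S]
                && (Y g <= m)%N]).
  case/existsP => g /andP[/forallP HS HY]; exists g; split.
    by move=> S HSk; move: (HS S); rewrite HSk eqxx.
  apply: leq_trans HY; rewrite /Y; apply: leq_add; [apply: leq_add|]; exact: leq_imset_card.
rewrite negb_exists => /forallP Hg; exfalso.
have key : forall g : {ffun coin -> bool}, 1 <= Xr g k + (Y g)%:R / m.+1%:R.
  move=> g; move: (Hg g); rewrite negb_and => /orP[].
  - rewrite negb_forall => /existsP [S]; rewrite negb_imply negbK => /andP[/eqP HSk Hind].
    have : 1 <= Xr g k.
      rewrite /Xr (bigD1 S) /=; last by rewrite HSk.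
      rewrite -indep_pairs Hind /= lerDl; apply: sumr_ge0 => ? _; exact: ler0n.
    have : 0 <= (Y g)%:R / m.+1%:R :> R by apply: divr_ge0; apply ler0n.
    by move=> h1 h2; apply: le_trans h2 _; rewrite lerDl.
  - rewrite -ltnNge => HY.
    have : 1 <= (Y g)%:R / m.+1%:R :> R by rewrite ler_pdivlMr ?ltr0n // mul1r ler_nat.
    have : 0 <= Xr g k by apply: sumr_ge0 => ? _; exact: ler0n.
    by move=> h1 h2; apply: le_trans h2 _; rewrite lerDr.
have E : \sum_(g : {ffun coin -> bool}) wgt g * (Xr g k + (Y g)%:R / m.+1%:R) =
  'C(N, k)%:R * (1 - p) ^+ 'C(k, 2) +
  (#|Can N 2|%:R * p ^+ 3 + #|Can N 3|%:R * p ^+ 4 + #|Can N 4|%:R * p ^+ 5) / m.+1%:R.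
  rewrite -EX -(@EY 2) // -(@EY 3) // -(@EY 4) //.
  rewrite -!big_split mulr_suml -big_split /=.
  by apply: eq_bigr => g _; rewrite /Y !natrD; ring.
have : \sum_(g : {ffun coin -> bool}) wgt g <=
       \sum_(g : {ffun coin -> bool}) wgt g * (Xr g k + (Y g)%:R / m.+1%:R).
  apply: ler_sum => g _; rewrite -{1}[wgt g]mulr1.
  by apply: ler_wpM2l; [exact: wgt_ge0 | exact: key].
rewrite E wgt_sum1 => H2.
by move: (lt_le_trans H H2); rewrite ltxx.
Qed.

End Coins.

Lemma subset_card (T : finType) (A : {set T}) k :
  (k <= #|A|)%N -> exists B : {set T}, B \subset A /\ #|B| = k.
Proof.
move=> kA; exists [set x in take k (enum A)]; split.
  by apply/subsetP => x; rewrite inE => /mem_take; rewrite mem_enum.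
rewrite cardsE; move/card_uniqP: (take_uniq k (enum_uniq (mem A))) => ->.
by rewrite size_takel // -cardE.
Qed.

Section Final.
Variable N : nat.
Variable g : {ffun coin N -> bool}.
Variable k : nat.
Hypothesis noind : forall S : {set 'I_N}, #|S| = k -> ~~ independent (adj g) S.

Definition D : {set 'I_N} := Dl 2 g :|: Dl 3 g :|: Dl 4 g.
Definition ev (i : 'I_#|~: D|) : 'I_N := @enum_val 'I_N (~: D) i.
Definition e' : rel 'I_#|~: D| := fun i j => adj g (ev i) (ev j).

Lemma ev_inj : injective ev.
Proof. exact: enum_val_inj. Qed.

Lemma ev_notD i : ev i \notin D.
Proof. by have := enum_valP i; rewrite inE. Qed.

Lemma e'_simple : simple_graph e'.
Proof. split; [move=> i j; exact: adj_sym | move=> i; exact: adj_irr]. Qed.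

Lemma cyc_in_D l (h : 'I_l.+1 -> 'I_#|~: D|) : (1 < l)%N -> injective h ->
  (forall i, e' (h i) (h (ordS i))) -> exists r, ev (h r) \in Dl l g.
Proof.
move=> l1 hi hc.
pose F := [ffun i => ev (h i)].
have Fi : injective F by move=> i j; rewrite !ffunE => /ev_inj /hi.
pose r := [arg min_(i < ord0) (F i : nat)].
have rmin : forall i, (F r <= F i)%N.
  by rewrite /r; case: arg_minnP => // j _ Hj i; apply: Hj.
exists r.
pose G := [ffun i => F (rot r i)].
have -> : ev (h r) = G ord0 by rewrite !ffunE rot0.
apply/imsetP; exists G => //; rewrite inE; apply/andP; split.
  apply/andP; split.
    by apply/injectiveP => i j; rewrite !ffunE => /ev_inj /hi /rot_inj.
  by apply/forallP => i; move: (rmin (rot r i)); rewrite !ffunE rot0.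
apply/forallP => i; rewrite !ffunE rot_ordS.
by move: (hc (rot r i)); rewrite /e' /adj => /andP[_ H].
Qed.

Lemma e'_girth : girth_ge e' 6.
Proof.
move=> k' /andP[k3 k6] [f [fi fc]].
have DD l x : x \in Dl l g -> (l == 2)%N || (l == 3)%N || (l == 4)%N -> x \in D.
  by move=> xD /orP[/orP[]|] /eqP El; subst l; rewrite /D !inE xD ?orbT.
move: k3 k6 f fi fc.
case: k' => [|[|[|[|[|[|k']]]]]] // _ _ f fi fc.
- have [r Hr] := @cyc_in_D 2 f erefl fi fc.
  by move: (ev_notD (f r)); rewrite (DD _ _ Hr).
- have [r Hr] := @cyc_in_D 3 f erefl fi fc.
  by move: (ev_notD (f r)); rewrite (DD _ _ Hr).
- have [r Hr] := @cyc_in_D 4 f erefl fi fc.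
  by move: (ev_notD (f r)); rewrite (DD _ _ Hr).
Qed.

Lemma e'_indsz S : (0 < k)%N -> independent e' S -> (#|S| <= k.-1)%N.
Proof.
move=> k0 HS; rewrite leqNgt; apply/negP => big.
have kS : (k <= #|ev @: S|)%N by rewrite card_imset; [rewrite -(prednK k0)|exact: ev_inj].
have [B [BS Bk]] := subset_card kS.
move: (noind Bk) => /negP; apply.
apply/forall_inP => x xB; apply/forall_inP => y yB.
have /imsetP [a aS ->] := subsetP BS x xB.
have /imsetP [b bS ->] := subsetP BS y yB.
by move/forall_inP: HS => /(_ a aS)/forall_inP/(_ b bS).
Qed.

Lemma e'_frac (R : realType) (w : {set 'I_#|~: D|} -> R) : (0 < k)%N ->
  fractional_colouring e' w -> #|~: D|%:R <= (k.-1)%:R * fc_weight e' w.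
Proof.
move=> k0 [w0 wc].
have -> : #|~: D|%:R = \sum_(v : 'I_#|~: D|) (1 : R) by rewrite sumr_const card_ord.
apply: le_trans (ler_sum _ (fun v _ => wc v)) _.
under eq_bigr do rewrite big_mkcond /=.
rewrite exchange_big /= /fc_weight mulr_sumr [X in _ <= X]big_mkcond /=.
apply: ler_sum => S _.
case: (boolP (independent e' S)) => HS /=.
  rewrite -big_mkcond /= sumr_const.
  Show.
  rewrite -[w S *+ _]mulr_natl; apply: ler_wpM2r; [exact: w0 | rewrite ler_nat; exact: e'_indsz].
by rewrite big1.
Qed.

End Final.

Lemma main_abstract (R : realType) (N k m : nat) (p : R) : 0 <= p -> p <= 1 -> (1 < k)%N ->
  'C(N, k)%:R * (1 - p) ^+ 'C(k, 2) +
  (#|Can N 2|%:R * p ^+ 3 + #|Can N 3|%:R * p ^+ 4 + #|Can N 4|%:R * p ^+ 5) / m.+1%:R < 1 ->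
  31%:R * (k.-1)%:R <= 10%:R * (N%:R - m%:R) :> R ->
  exists (n : nat) (e : rel 'I_n), (n <= N)%N /\ simple_graph e /\ girth_ge e 6 /\
    frac_chrom_ge e ((31%:R / 10%:R) : R).
Proof.
move=> p0 p1 k1 H Hnum.
have k0 : (0 < k)%N by apply: ltn_trans k1.
have [g [Hind HD]] := exists_good p0 p1 H.
exists #|~: D g|, (@e' N g).
split; first by apply: leq_trans (max_card _) _; rewrite card_ord.
split; first exact: e'_simple.
split; first exact: e'_girth.
move=> w Hw.
have H1 := e'_frac Hind k0 Hw.
have Hn : N%:R - m%:R <= #|~: D g|%:R :> R.
  have HC := cardsC (D g); rewrite card_ord in HC.
  have HDm : (#|D g| <= m)%N.
    apply: leq_trans _ HD; rewrite /D.
    apply: leq_trans (leq_card_setU _ _) _; rewrite leq_add2r.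
    exact: leq_card_setU.
  have Hc : N%:R = #|D g|%:R + #|~: D g|%:R :> R by rewrite -natrD HC.
  have : #|D g|%:R <= m%:R :> R by rewrite ler_nat.
  rewrite Hc; lra.
have kpos : 0 < (k.-1)%:R :> R by rewrite ltr0n -ltnS prednK.
set F := fc_weight _ _ in H1 *.
set K := (k.-1)%:R in H1 Hnum kpos *.
set n := #|~: D g|%:R in H1 Hn *.
rewrite ler_pdivrMr ?ltr0n //.
have : 31%:R * K <= 10%:R * K * F.
  apply: le_trans Hnum _; rewrite -mulrA ler_wpM2l ?ler0n //.
  by apply: le_trans H1; rewrite lerBlDr; move: Hn; rewrite lerBlDr.
rewrite [10%:R * K]mulrC -mulrA (mulrC 31%:R) ler_pM2l //.
by rewrite mulrC.
Qed.

Local Open Scope ring_scope.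

Lemma ffact_le_exp (N k : nat) : (N ^_ k <= N ^ k)%N.
Proof.
rewrite ffact_prod; apply: leq_trans (leq_prod (E2 := fun _ => N) _) _.
  by move=> i _; exact: leq_subr.
by rewrite prod_nat_const card_ord.
Qed.

Lemma binom_bound (R : realType) (N k : nat) : (0 < k)%N ->
  'C(N, k)%:R <= (N%:R / k%:R) ^+ k * expR (k%:R) :> R.
Proof.
move=> k0.
have kR : 0 < k%:R :> R by rewrite ltr0n.
have fR : 0 < k`!%:R :> R by rewrite ltr0n fact_gt0.
have h1 : 'C(N, k)%:R * k`!%:R <= N%:R ^+ k :> R.
  by rewrite -natrM -natrX ler_nat bin_ffact ffact_le_exp.
have h2 : k%:R ^+ k / k`!%:R <= expR k%:R :> R.
  have := @expR_ge1Dxn R k%:R k.-1 (ler0n _ _); rewrite prednK //.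
  have : 0 <= k%:R ^+ k / k`!%:R :> R by apply: divr_ge0; [apply: exprn_ge0; apply: ler0n | apply: ler0n].
  move=> ? ?; lra.
have kk : 0 < k%:R ^+ k :> R by apply: exprn_gt0.
rewrite exprMn exprVn.
apply: le_trans (_ : N%:R ^+ k / k`!%:R <= _).
  by rewrite ler_pdivlMr.
rewrite -mulrA ler_wpM2l ?exprn_ge0 ?ler0n //.
by rewrite -(ler_pM2l kk) mulrA mulfV ?gt_eqF // mul1r.
Qed.

Lemma binC2 (R : realType) k : ('C(k, 2)%:R : R) = k%:R * (k.-1)%:R / 2.
Proof.
have := bin_ffact k 2; rewrite ffactnS ffactn1 /= => H.
have -> : (k%:R * (k.-1)%:R : R) = ('C(k, 2) * 2)%:R by rewrite H natrM.
by rewrite natrM mulfK // pnatr_eq0.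
Qed.

Lemma EX_bound (R : realType) (N k : nat) (p : R) : 0 <= p -> p <= 1 -> (0 < k)%N ->
  'C(N, k)%:R * (1 - p) ^+ 'C(k, 2) <=
  (N%:R / k%:R * expR (1 - p * (k.-1)%:R / 2)) ^+ k.
Proof.
move=> p0 p1 k0.
have h1 : (1 - p) ^+ 'C(k, 2) <= expR ('C(k, 2)%:R * - p).
  rewrite expRM_natl; apply: lerXn2r; rewrite ?nnegrE ?expR_ge0 //; first lra.
  by have := expR_ge1Dx (- p); lra.
apply: le_trans (ler_pM _ _ (@binom_bound R N k k0) h1) _.
- exact: ler0n.
- by apply: exprn_ge0; lra.
rewrite -[_ * expR _ * _]mulrA -expRD (exprMn k (N%:R / k%:R)); apply: ler_wpM2l.
  by apply: exprn_ge0; apply: divr_ge0; apply: ler0n.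
rewrite -expRM_natl binC2; rewrite le_eqVlt; apply/orP; left; apply/eqP; congr expR.
by field.
Qed.

Lemma bern (R : realType) (d : R) n : 0 <= d -> d <= 1 -> (1 - d) ^+ n * (1 + n%:R * d) <= 1.
Proof.
move=> d0 d1; elim: n => [|n IH]; first by rewrite expr0 mul0r addr0 mulr1.
have a0 : 0 <= (1 - d) ^+ n by apply: exprn_ge0; lra.
have E : (1 - d) ^+ n.+1 * (1 + n.+1%:R * d) =
   (1 - d) ^+ n * (1 + n%:R * d) - (1 - d) ^+ n * (d ^+ 2 * n.+1%:R).
  by rewrite exprS -natr1; ring.
rewrite E; apply: le_trans IH; rewrite lerBlDr lerDl.
by apply: mulr_ge0 => //; apply: mulr_ge0; [apply: exprn_ge0 | apply: ler0n].
Qed.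

Lemma pow_small (R : realType) (q : R) (n : nat) : 0 <= q -> q <= 999%:R / 1000%:R ->
  q ^+ n <= 1000%:R / (1000%:R + n%:R).
Proof.
move=> q0 q1.
have d0 : 0 <= 1%:R / 1000%:R :> R by apply: divr_ge0; apply: ler0n.
have d1 : 1%:R / 1000%:R <= 1 :> R by rewrite ler_pdivrMr ?ltr0n // mul1r ler_nat.
have := bern n d0 d1.
have -> : 1 - 1%:R / 1000%:R = 999%:R / 1000%:R :> R by field.
have -> : 1 + n%:R * (1%:R / 1000%:R) = (1000%:R + n%:R) / 1000%:R :> R.
  by field.
have pos : 0 < (1000%:R + n%:R) / 1000%:R :> R.
  by apply: divr_gt0; [apply: ltr_wpDr; [apply: ler0n | rewrite ltr0n] | rewrite ltr0n].
move=> H.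
have pos2 : 0 < 1000%:R + n%:R :> R by apply: ltr_wpDr; [apply: ler0n | rewrite ltr0n].
have H2 : (999%:R / 1000%:R) ^+ n <= 1000%:R / (1000%:R + n%:R) :> R.
  have -> : 1000%:R / (1000%:R + n%:R) = 1 / ((1000%:R + n%:R) / 1000%:R) :> R.
    by field; rewrite gt_eqF.
  by rewrite ler_pdivlMr.
apply: le_trans H2; apply: lerXn2r => //; rewrite nnegrE //.
by apply: divr_ge0; apply: ler0n.
Qed.

Lemma Can_bound (R : realType) (N l : nat) (p : R) : 0 <= p ->
  #|Can N l|%:R * p ^+ l.+1 <= (N%:R * p) ^+ l.+1 / l.+1%:R.
Proof.
move=> p0.
have H : #|Can N l|%:R * l.+1%:R <= N%:R ^+ l.+1 :> R.
  by rewrite -natrM -natrX ler_nat card_Can.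
rewrite exprMn ler_pdivlMr ?ltr0n // mulrAC ler_wpM2r ?exprn_ge0 //.
Qed.

Lemma sq_step (R : realType) (x b c : R) : 0 <= b -> b <= x -> c <= b ^+ 2 -> c <= x ^+ 2.
Proof.
move=> b0 bx cb; apply: le_trans cb _; apply: lerXn2r => //; rewrite nnegrE //.
exact: le_trans bx.
Qed.

Lemma expR_lb (R : realType) :
  3580193%:R / 1000000%:R <= expR (5153%:R / 4000%:R) :> R.
Proof.
pose y : R := 5153%:R / 256000%:R.
have -> : 5153%:R / 4000%:R = 64%:R * y :> R by rewrite /y; lra.
rewrite expRM_natl.
have h0 : 261153%:R / 256000%:R <= expR y :> R.
  apply: le_trans (expR_ge1Dx y); rewrite /y; lra.
have -> : (64 = 2 * (2 * (2 * (2 * (2 * 2)))))%N by [].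
rewrite !exprM.
have h1 : 520331%:R / 500000%:R <= expR y ^+ 2 :> R by apply: (sq_step _ h0); lra.
have h2 : 1082977%:R / 1000000%:R <= (expR y ^+ 2) ^+ 2 :> R by apply: (sq_step _ h1); lra.
have h3 : 1172839%:R / 1000000%:R <= ((expR y ^+ 2) ^+ 2) ^+ 2 :> R by apply: (sq_step _ h2); lra.
have h4 : 1375551%:R / 1000000%:R <= (((expR y ^+ 2) ^+ 2) ^+ 2) ^+ 2 :> R by apply: (sq_step _ h3); lra.
have h5 : 94607%:R / 50000%:R <= ((((expR y ^+ 2) ^+ 2) ^+ 2) ^+ 2) ^+ 2 :> R by apply: (sq_step _ h4); lra.
by apply: (sq_step _ h5); lra.
Qed.

Lemma natr_big (R : realType) (a b c : nat) : ((a * b ^ c)%N%:R : R) = a%:R * b%:R ^+ c.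
Proof. by rewrite natrM natrX. Qed.

Lemma natr_bigS (R : realType) (a b c : nat) : ((a * b ^ c).+1%:R : R) = a%:R * b%:R ^+ c + 1.
Proof. by rewrite -natr1 natr_big. Qed.

Lemma q_real (R : realType) (a b c p : R) : p = 81%:R / 10%:R ^+ 7 ->
  a = 565%:R * 10%:R ^+ 3 -> b = 2%:R * 10%:R ^+ 6 -> c = 565%:R * 10%:R ^+ 3 + 1 ->
  b / c * expR (1 - p * a / 2) <= 999%:R / 1000%:R.
Proof.
move=> -> -> -> ->.
have hpk : 1 - 81%:R / 10%:R ^+ 7 * (565%:R * 10%:R ^+ 3) / 2 = - (5153%:R / 4000%:R) :> R.
  by field.
rewrite hpk expRN ler_pdivrMr ?expR_gt0 //.
have cpos : 0 < 565%:R * 10%:R ^+ 3 + 1 :> R by lra.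
rewrite ler_pdivrMr //.
have hE := expR_lb R; lra.
Qed.

Lemma final_real (R : realType) (A Y2 Y3 Y4 Nr Kr Mr p : R) : p = 81%:R / 10%:R ^+ 7 ->
  Nr = 2%:R * 10%:R ^+ 6 -> Kr = 565%:R * 10%:R ^+ 3 + 1 -> Mr = 248%:R * 10%:R ^+ 3 + 1 ->
  A <= 1000%:R / (1000%:R + Kr) ->
  Y2 <= (Nr * p) ^+ 3 / 3%:R -> Y3 <= (Nr * p) ^+ 4 / 4%:R -> Y4 <= (Nr * p) ^+ 5 / 5%:R ->
  A + (Y2 + Y3 + Y4) / Mr < 1.
Proof.
move=> -> -> -> ->.
have -> : 2%:R * 10%:R ^+ 6 * (81%:R / 10%:R ^+ 7) = 81%:R / 5%:R :> R by field.
move=> hA h2 h3 h4.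
have kpos : 0 < 1000%:R + (565%:R * 10%:R ^+ 3 + 1) :> R by lra.
have mpos : 0 < 248%:R * 10%:R ^+ 3 + 1 :> R by lra.
have hA2 : 1000%:R / (1000%:R + (565%:R * 10%:R ^+ 3 + 1)) <= 1 / 500%:R :> R.
  rewrite ler_pdivrMr //; lra.
have hS : (Y2 + Y3 + Y4) / (248%:R * 10%:R ^+ 3 + 1) <= 975%:R / 1000%:R :> R.
  rewrite ler_pdivrMr //; lra.
lra.
Qed.

Lemma lemma7_aux (R : realType) :
  exists (n : nat) (e : rel 'I_n),
    (n <= 2 * 10 ^ 6)%N /\ simple_graph e /\ girth_ge e 6 /\
    frac_chrom_ge e ((31%:R / 10%:R) : R).
Proof.
pose p : R := 81%:R / 10%:R ^+ 7.
have p0 : 0 <= p by apply: divr_ge0; [apply: ler0n | apply: exprn_ge0; apply: ler0n].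
have p1 : p <= 1 by rewrite /p ler_pdivrMr ?exprn_gt0 ?ltr0n // mul1r; lra.
apply: (@main_abstract R (2 * 10 ^ 6) (565 * 10 ^ 3).+1 (248 * 10 ^ 3) p p0 p1).
- rewrite ssrnat.ltnS muln_gt0 expn_gt0.
  by apply/andP; split; [exact: ltn0Sn | apply/orP; left; exact: ltn0Sn].
- have kpos : (0 < (565 * 10 ^ 3).+1)%N := ltn0Sn _.
  have hX := @EX_bound R (2 * 10 ^ 6) (565 * 10 ^ 3).+1 p p0 p1 kpos.
  have ek : ((565 * 10 ^ 3).+1.-1 = 565 * 10 ^ 3)%N by [].
  rewrite ek in hX.
  have e1 := natr_big R 565 10 3.
  have e2 := natr_big R 2 10 6.
  have e3 := natr_bigS R 248 10 3.
  have e4 := natr_bigS R 565 10 3.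
  have hY2 := @Can_bound R (2 * 10 ^ 6) 2 p p0.
  have hY3 := @Can_bound R (2 * 10 ^ 6) 3 p p0.
  have hY4 := @Can_bound R (2 * 10 ^ 6) 4 p p0.
  have hE := expR_lb R.
  have hq0 : 0 <= (2 * 10 ^ 6)%N%:R / (565 * 10 ^ 3).+1%:R * expR (1 - p * (565 * 10 ^ 3)%N%:R / 2) :> R.
    by apply: mulr_ge0; [apply: divr_ge0; apply: ler0n | exact: expR_ge0].
  have hq1 := q_real erefl e1 e2 e4.
  have hX2 := le_trans hX (@pow_small R _ _ hq0 hq1).
  exact: (final_real erefl e2 e4 e3 hX2 hY2 hY3 hY4).
- have ek : ((565 * 10 ^ 3).+1.-1 = 565 * 10 ^ 3)%N by [].
  rewrite ek.
  have e1 := natr_big R 565 10 3.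
  have e2 := natr_big R 2 10 6.
  have e3 := natr_big R 248 10 3.
  move: e1 e2 e3.
  generalize ((565 * 10 ^ 3)%N%:R : R) ((2 * 10 ^ 6)%N%:R : R) ((248 * 10 ^ 3)%N%:R : R).
  move=> a b c h1 h2 h3; lra.
Qed.

Local Close Scope ring_scope.

Theorem lemma7 (R : realType) :
  exists (n : nat) (e : rel 'I_n),
    (n <= 2 * 10 ^ 6)%N /\ simple_graph e /\ girth_ge e 6 /\
    frac_chrom_ge e ((31%:R / 10%:R) : R).
Proof. exact: lemma7_aux. Qed.
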